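(* Let $C_\infty=(\mathbb{N},+)$ and let $\mathcal{A}$ be an $\mathbb{H}C_\infty$-module. For every integer $r\ge3$ there is a natural isomorphism $H^{r+2}(C_\infty,r;\mathcal{A})\cong\{a\in\mathcal{A}(2) : 2a=0\}$.
   Context: General setting (for a commutative monoid $M$ with identity $e$, written multiplicatively; for $C_\infty$ read $xy$ as $x+y$, $e$ as $0$): $\mathbb{H}M$ has objects the elements of $M$ and morphisms $(x,y):x\to xy$, composition $(xy,z)(x,y)=(x,yz)$. An $\mathbb{H}M$-module $\mathcal{A}$ is a functor $\mathbb{H}M\to\mathbf{Ab}$: groups $\mathcal{A}(x)$ with $y_*:\mathcal{A}(x)\to\mathcal{A}(xy)$, $y_*z_*=(yz)_*$, $e_*=\mathrm{id}$. Tensor product $(\mathcal{A}\otimes_{\mathbb{H}M}\mathcal{B})(x)=\bigoplus_{zt=x}\mathcal{A}(z)\otimes\mathcal{B}(t)/(u_*a\otimes b=a\otimes u_*b)$; unit the constant module $\mathbb{Z}$; chain complexes of $\mathbb{H}M$-modules form a symmetric monoidal category with Koszul signs. A commutative DGA-algebra over $\mathbb{H}M$ is a commutative monoid $(\mathcal{A},\circ,\iota)$ there with a monoid morphism $\epsilon:\mathcal{A}\to\mathbb{Z}$, $\epsilon_x(a)=\tilde\epsilon(a)x$. Its reduced bar construction $\mathbf{B}(\mathcal{A})$ has $\mathbf{B}(\mathcal{A})_n(x)$ generated by $[\,]$ (degree $0$) and $[a_1|\cdots|a_p]$ with $a_i\in(\mathrm{coker}\,\iota)_{r_i}(x_i)$,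 $x_1\cdots x_p=x$, $p+\sum r_i=n$; differential $\partial[a_1|\cdots|a_p]=-\sum_i(-1)^{e_{i-1}}[\cdots|\partial a_i|\cdots]+\tilde\epsilon(a_1)x_{1*}[a_2|\cdots]+\sum_{i<p}(-1)^{e_i}[\cdots|a_i\circ a_{i+1}|\cdots]+(-1)^{e_p}\tilde\epsilon(a_p)x_{p*}[\cdots|a_{p-1}]$, $e_i=i+r_1+\cdots+r_i$; multiplication the signed shuffle product $[a_1|\cdots|a_p]\circ[a_{p+1}|\cdots|a_{p+q}]=\sum_\sigma(-1)^{e(\sigma)}[a_{\sigma^{-1}(1)}|\cdots|a_{\sigma^{-1}(p+q)}]$, $e(\sigma)=\sum_{\sigma(i)>\sigma(p+j)}(1+r_i)(1+r_{p+j})$; unit $[\,]$; augmentation $\mathbf{B}(\mathcal{A})_0\cong\mathbb{Z}$. It is again such an algebra, so $\mathbf{B}^r$ is defined. $\mathcal{Z}M$: $\mathcal{Z}M(x)$ free abelian on $\{(u,v):uv=x\}$, $y_*(u,v)=(yu,v)$, $(u,v)\circ(w,t)=(uw,vt)$, unit $(e,e)$, degree $0$, augmentation $(u,v)\mapsto$ generator of $\mathbb{Z}(x)$. $H^n(M,r;\mathcal{A})=H^n(\mathrm{Hom}_{\mathbb{H}M}(\mathbf{B}^r(\mathcal{Z}M),\mathcal{A}))$. *)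

(* Defs.v *)
From mathcomp Require Import all_boot all_order all_algebra.
Set Implicit Arguments. Unset Strict Implicit. Unset Printing Implicit Defensive.
Import GRing.Theory.
Local Open Scope ring_scope.

(* H C_oo - modules, C_oo = (nat,+), e = 0.                            *)
(* A module is a family of abelian groups A(x), x : nat, with additive *)
(* maps y_* : A(x) -> A(x+y), y_* z_* = (y z)_*, e_* = id.             *)

Definition tr (A : nat -> zmodType) (x z : nat) (a : A x) : A z :=
  match x =P z with
  | ReflectT e => eq_rect x (fun n => A n : Type) a z e
  | ReflectF _ => 0
  end.
Arguments tr : clear implicits.

Unset Implicit Arguments.
Record HMod := {
  Mod : nat -> zmodType;
  act : forall x y : nat, Mod x -> Mod (x + y)%N;
  actB : forall x y (a b : Mod x), act x y (a - b) = act x y a - act x y b;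
  act0 : forall x (a : Mod x), tr Mod (x + 0)%N x (act x 0 a) = a;
  actM : forall x y z (a : Mod x),
      act (x + y)%N z (act x y a) = tr Mod (x + (y + z))%N (x + y + z)%N (act x (y + z) a)
}.
Set Implicit Arguments.

Definition hmorph (A B : HMod) (phi : forall x, Mod A x -> Mod B x) : Prop :=
  (forall x (a b : Mod A x), phi x (a - b) = phi x a - phi x b) /\
  (forall x y (a : Mod A x), phi (x + y)%N (act A x y a) = act B x y (phi x a)).

(* Commutative DGA-algebras over H C_oo that are FREE as H C_oo-modules*)
(* on a given basis, each basis element b generating a copy of the     *)
(* representable module at its weight wt b (i.e. an element b of      *)
(* A(wt b) with y_* b in A(wt b + y)), in homological degree deg b.    *)
(*   ok b    : b is a genuine basis element (basis = {b | ok b})        *)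
(*   isu b   : b is the unit basis element iota(1) (weight 0, degree 0) *)
(*   dif b   : the differential of b, as a formal Z-combination of      *)
(*             basis elements b', each implicitly shifted by            *)
(*             (wt b - wt b')_*                                          *)
(*   mul b c : the product b o c, in the same format (weight wt b+wt c) *)
Unset Implicit Arguments.
Record BAlg := {
  bas : Type;
  ok : bas -> bool;
  isu : bas -> bool;
  wt : bas -> nat;
  deg : bas -> nat;
  aug : bas -> int;
  dif : bas -> seq (int * bas);
  mul : bas -> bas -> seq (int * bas)
}.
Set Implicit Arguments.

(* The algebra Z M for M = C_oo : Z M(x) is free on the (u,v), u+v = x, *)
(* and (u,v) = u_*(0,v); so Z M is free on the g_v := (0,v), v : nat,  *)
(* g_v of weight v, degree 0; unit g_0 = (e,e); g_v o g_w = g_(v+w);   *)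
(* augmentation eps~(g_v) = 1; zero differential.                       *)
Definition ZMalg : BAlg :=
  {| bas := nat;
     ok := fun _ => true;
     isu := fun v => v == 0%N;
     wt := fun v => v;
     deg := fun _ => 0%N;
     aug := fun _ => 1;
     dif := fun _ => [::];
     mul := fun v w => [:: (1, (v + w)%N)] |}.

Section Bar.
Variable L : BAlg.
Let T := bas L.

Fixpoint splits (s : seq T) : seq (seq T * T * seq T) :=
  if s is a :: t then
    ([::], a, t) :: [seq (a :: x.1.1, x.1.2, x.2) | x <- splits t]
  else [::].

Fixpoint splits2 (s : seq T) : seq (seq T * T * T * seq T) :=
  match s with
  | a :: ((b :: t) as u) =>
      ([::], a, b, t) :: [seq (a :: x.1.1.1, x.1.1.2, x.1.2, x.2) | x <- splits2 u]
  | _ => [::]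
  end.

(* e_i for the prefix [a_1|...|a_i] : e_i = i + r_1 + ... + r_i *)
Definition epre (pre : seq T) : nat := (size pre + sumn (map (deg L) pre))%N.

Definition sgn (n : nat) : int := (-1) ^+ n.

(* keep only the terms which are nonzero in coker iota *)
Definition nonunit (l : seq (int * T)) := [seq x <- l | ~~ isu L x.2].

Definition bar_dif (s : seq T) : seq (int * seq T) :=
  (* - sum_i (-1)^(e_(i-1)) [ ... | d a_i | ... ] *)
  flatten [seq [seq (- (sgn (epre x.1.1)) * c.1, x.1.1 ++ c.2 :: x.2)
               | c <- nonunit (dif L x.1.2)] | x <- splits s]
  (* + eps~(a_1) x_1* [a_2|...|a_p] *)
  ++ (if s is a :: t then [:: (aug L a, t)] else [::])
  (* + sum_(i<p) (-1)^(e_i) [ ... | a_i o a_(i+1) | ... ] *)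
  ++ flatten [seq [seq (sgn (epre (rcons x.1.1.1 x.1.1.2)) * c.1,
                        x.1.1.1 ++ c.2 :: x.2)
               | c <- nonunit (mul L x.1.1.2 x.1.2)] | x <- splits2 s]
  (* + (-1)^(e_p) eps~(a_p) x_p* [a_1|...|a_(p-1)] *)
  ++ (if rev s is a :: t then [:: (sgn (epre s) * aug L a, rev t)] else [::]).

(* signed shuffle product:  sum over (p,q)-shuffles sigma of
   (-1)^(e(sigma)) [a_(sigma^-1 1)| ... ], e(sigma) = sum over pairs
   (i in first block, j in second block) with sigma(i) > sigma(p+j) of
   (1 + r_i)(1 + r_(p+j)). *)
Fixpoint shuffle (s : seq T) : seq T -> seq (int * seq T) :=
  match s with
  | [::] => fun t => [:: (1, t)]
  | a :: s' =>
      fix shuffle_t (t : seq T) : seq (int * seq T) :=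
        match t with
        | [::] => [:: (1, a :: s')]
        | b :: t' =>
            [seq (x.1, a :: x.2) | x <- shuffle s' t]
            ++ [seq (sgn ((1 + deg L b) * sumn [seq (1 + deg L y)%N | y <- a :: s'])
                     * x.1, b :: x.2) | x <- shuffle_t t']
        end
  end.

(* The reduced bar construction B(L): free on the [a_1|...|a_p] with    *)
(* a_i non-unit basis elements of L (= basis of coker iota), p >= 0.    *)
Definition bar : BAlg :=
  {| bas := seq T;
     ok := fun s => all (fun b => ok L b && ~~ isu L b) s;
     isu := fun s => nilp s;
     wt := fun s => sumn (map (wt L) s);
     deg := fun s => (size s + sumn (map (deg L) s))%N;
     aug := fun s => if s is [::] then 1 else 0;
     dif := bar_dif;
     mul := shuffle |}.

End Bar.

Definition BrZ (r : nat) : BAlg := iter r bar ZMalg.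

(* The cochain complex Hom_{H M}(B, A): a homomorphism from the free    *)
(* module on the degree-n basis elements is (by Yoneda) a family of     *)
(* values f b in A(wt b).                                               *)
Section Cochains.
Variables (L : BAlg) (A : HMod).

Definition cbas (n : nat) := {b : bas L | ok L b && (deg L b == n)}.

Definition cochain (n : nat) := forall b : cbas n, Mod A (wt L (sval b)).

Definition evalc n (f : cochain n) (b' : bas L) (z : nat) : Mod A z :=
  match @insub _ (fun b => ok L b && (deg L b == n)) _ b' with
  | Some bb => tr (Mod A) _ z (act A (wt L (sval bb)) (z - wt L (sval bb))%N (f bb))
  | None => 0
  end.

Definition cobound n (f : cochain n) : cochain n.+1 :=
  fun b => \sum_(c <- dif L (sval b)) (evalc f c.2 (wt L (sval b)) *~ c.1).

Definition is_cocycle n (f : cochain n) : Prop := forall b, cobound f b = 0.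

Definition is_coboundary n (f : cochain n.+1) : Prop :=
  exists g : cochain n, forall b, f b = cobound g b.

Definition addc n (f g : cochain n) : cochain n := fun b => f b + g b.

End Cochains.

Definition mapc (L : BAlg) (A B : HMod) (phi : forall x, Mod A x -> Mod B x) n
  (f : cochain L A n) : cochain L B n := fun b => phi _ (f b).

(* Main.v *)
Require Import Defs.
From mathcomp Require Import all_boot all_order all_algebra.
From mathcomp Require Import zify.
Import GRing.Theory.
Local Open Scope ring_scope.
From Stdlib Require Import FunctionalExtensionality.
Set Implicit Arguments. Unset Strict Implicit. Unset Printing Implicit Defensive.

Section Addf.
Variables (M N : zmodType) (f : M -> N).
Hypothesis fB : forall a b, f (a - b) = f a - f b.
Lemma af0 : f 0 = 0.
Proof. by rewrite -(subrr 0) fB subrr. Qed.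
Lemma afN a : f (- a) = - f a.
Proof. by rewrite -sub0r fB af0 sub0r. Qed.
Lemma afD a b : f (a + b) = f a + f b.
Proof. by have := fB a (- b); rewrite opprK afN opprK. Qed.
Lemma afMn a k : f (a *+ k) = f a *+ k.
Proof. elim: k => [|k IH]; first by rewrite !mulr0n af0. by rewrite !mulrS afD IH. Qed.
Lemma afMz a k : f (a *~ k) = f a *~ k.
Proof. case: k => [k|k]; first by rewrite -!pmulrn afMn. by rewrite !NegzE !mulrNz afN afMn. Qed.
Lemma afsum (I : Type) (r : seq I) (F : I -> M) : f (\sum_(i <- r) F i) = \sum_(i <- r) f (F i).
Proof. elim: r => [|x r IH]; first by rewrite !big_nil af0. by rewrite !big_cons afD IH. Qed.
End Addf.

Section Tr.
Implicit Types x y z : nat.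
Variable A : HMod.
Local Notation M := (Mod A).

Lemma trK x (a : M x) : tr M x x a = a.
Proof. rewrite /tr; case: eqP => // e. by rewrite (eq_irrelevance e erefl). Qed.

Lemma tr_ne x z (a : M x) : x <> z -> tr M x z a = 0.
Proof. by rewrite /tr; case: eqP. Qed.

Lemma tr_tr x y z (a : M x) : x = y -> tr M y z (tr M x y a) = tr M x z a.
Proof. by move=> e; subst; rewrite trK. Qed.

Lemma trB x z (a b : M x) : tr M x z (a - b) = tr M x z a - tr M x z b.
Proof.
case: (x =P z) => [e|ne]; first by subst; rewrite !trK.
by rewrite !tr_ne // subrr.
Qed.

Lemma act_tr x y k (a : M x) : x = y -> act A y k (tr M x y a) = tr M (x + k)%N (y + k)%N (act A x k a).
Proof. by move=> e; subst; rewrite !trK. Qed.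

Definition P (x z : nat) (a : M x) : M z := tr M (x + (z - x))%N z (act A x (z - x) a).
Arguments P : clear implicits.

Lemma PB x z (a b : M x) : P x z (a - b) = P x z a - P x z b.
Proof. by rewrite /P actB trB. Qed.

Lemma P_id x (a : M x) : P x x a = a.
Proof. by rewrite /P subnn act0. Qed.

Lemma P_gt x z (a : M x) : (z < x)%N -> P x z a = 0.
Proof. move=> h; rewrite /P tr_ne //; lia. Qed.

Lemma P_comp x y z (a : M x) : (x <= y)%N -> (y <= z)%N -> P y z (P x y a) = P x z a.
Proof.
move=> hxy hyz; rewrite /P.
rewrite act_tr; last lia.
rewrite tr_tr; last lia.
rewrite actM tr_tr; last lia.
have -> : (z - x = (y - x) + (z - y))%N by lia.
done.
Qed.

Lemma P_eqw x y z (a : M x) : x = y -> P x z a = P y z (tr M x y a).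
Proof. by move=> e; subst; rewrite trK. Qed.

End Tr.
Arguments P {A} x z a.

Lemma phi_tr (A B : HMod) (phi : forall x, Mod A x -> Mod B x) : hmorph phi ->
  forall x z (a : Mod A x), phi z (tr (Mod A) x z a) = tr (Mod B) x z (phi x a).
Proof.
rewrite /hmorph => -[hB _] x z a; case: (x =P z) => [e|ne]; first by subst; rewrite !trK.
rewrite !tr_ne //; exact: (af0 (hB z)).
Qed.

Lemma phi_P (A B : HMod) (phi : forall x, Mod A x -> Mod B x) : hmorph phi ->
  forall x z (a : Mod A x), phi z (P x z a) = P x z (phi x a).
Proof.
move=> hp x z a; rewrite /P phi_tr //. by case: hp => _ ->.
Qed.
Inductive zex := ZAtom of nat | ZZero | ZAdd of zex & zex | ZOpp of zex.

Section ZEval.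
Variable M : zmodType.
Fixpoint zeval (xs : seq M) (e : zex) : M :=
  match e with
  | ZAtom i => nth 0 xs i
  | ZZero => 0
  | ZAdd a b => zeval xs a + zeval xs b
  | ZOpp a => - zeval xs a
  end.
Fixpoint zcoef (e : zex) (i : nat) : int :=
  match e with
  | ZAtom j => if i == j then 1 else 0
  | ZZero => 0
  | ZAdd a b => zcoef a i + zcoef b i
  | ZOpp a => - zcoef a i
  end.
Lemma zeval_lin xs e : zeval xs e = \sum_(i < size xs) xs`_i *~ zcoef e i.
Proof.
elim: e => [j||a IHa b IHb|a IHa] /=.
- case: (ltnP j (size xs)) => hj.
  + rewrite (bigD1 (Ordinal hj)) //= eqxx mulr1z big1 ?addr0 // => k hk.
    have -> : (k == j :> nat) = false by apply/negbTE; move: hk; apply: contra => /eqP e; apply/eqP/val_inj.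
    by rewrite mulr0z.
  + rewrite nth_default // big1 // => k _.
    have -> : (k == j :> nat) = false by apply/negbTE; rewrite neq_ltn (leq_trans (ltn_ord k) hj).
    by rewrite mulr0z.
- by rewrite big1 // => k _; rewrite mulr0z.
- by rewrite IHa IHb -big_split; apply: eq_bigr => k _; rewrite mulrzDr.
- by rewrite IHa -sumrN; apply: eq_bigr => k _; rewrite mulrNz.
Qed.
Lemma zeval_eq xs e1 e2 :
  all (fun i => zcoef e1 i == zcoef e2 i) (iota 0 (size xs)) -> zeval xs e1 = zeval xs e2.
Proof.
move=> /allP h; rewrite !zeval_lin; apply: eq_bigr => k _.
by rewrite (eqP (h k _)) // mem_iota /= add0n ltn_ord.
Qed.
End ZEval.

Ltac zin x xs :=
  match xs with
  | nil => constr:(false)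
  | cons ?y _ => let _ := match goal with _ => unify x y end in constr:(true)
  | cons _ ?t => zin x t
  end.
Ltac zindex x xs :=
  match xs with
  | cons ?y _ => let _ := match goal with _ => unify x y end in constr:(0%N)
  | cons _ ?t => let n := zindex x t in constr:(S n)
  end.
Ltac zatoms t xs :=
  lazymatch t with
  | GRing.add ?a ?b => let xs := zatoms a xs in zatoms b xs
  | GRing.opp ?a => zatoms a xs
  | GRing.zero => xs
  | _ => let b := zin t xs in
         lazymatch b with true => xs | false => constr:(cons t xs) end
  end.
Ltac zreify t xs :=
  lazymatch t with
  | GRing.add ?a ?b => let ea := zreify a xs in let eb := zreify b xs in constr:(ZAdd ea eb)
  | GRing.opp ?a => let ea := zreify a xs in constr:(ZOpp ea)
  | GRing.zero => constr:(ZZero)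
  | _ => let i := zindex t xs in constr:(ZAtom i)
  end.
Ltac zmod_eq :=
  lazymatch goal with
  | |- @eq ?T ?l ?r =>
    let xs0 := constr:(@nil T) in
    let xs1 := zatoms l xs0 in
    let xs := zatoms r xs1 in
    let el := zreify l xs in
    let er := zreify r xs in
    change (zeval xs el = zeval xs er); apply: zeval_eq; by []
  end.


Ltac lin1 h :=
  apply/eqP; rewrite -subr_eq0; apply/eqP;
  lazymatch type of h with
  | ?E = 0 => first [ (transitivity E; [zmod_eq | exact h])
                    | (transitivity (- E); [zmod_eq | by rewrite h oppr0]) ]
  end.

Section Evalc.
Variables (L : BAlg) (A : HMod) (n : nat).
Implicit Types (f g : cochain L A n).

Lemma evalcE f s z : evalc f s z =
  if @insub _ (fun b => ok L b && (deg L b == n)) _ s is Some bb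
  then P (wt L (sval bb)) z (f bb) else 0.
Proof. by []. Qed.

Lemma evalc_self f (b : cbas L n) : evalc f (sval b) (wt L (sval b)) = f b.
Proof. by rewrite evalcE valK P_id. Qed.

Lemma evalc_ok f s z (H : ok L s && (deg L s == n)) :
  evalc f s z = P (wt L s) z (f (exist _ s H)).
Proof. by rewrite evalcE insubT. Qed.

Lemma evalc_nok f s z : ~~ (ok L s && (deg L s == n)) -> evalc f s z = 0.
Proof. by move=> h; rewrite evalcE insubF //; apply/negbTE. Qed.

Lemma evalc_ext f g s z : (forall b, f b = g b) -> evalc f s z = evalc g s z.
Proof. by move=> h; rewrite !evalcE; case: insub => // bb; rewrite h. Qed.

Definition negc f : cochain L A n := fun b => - f b.
Definition zeroc : cochain L A n := fun b => 0.

Lemma evalc_neg f s z : evalc (negc f) s z = - evalc f s z.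
Proof. rewrite !evalcE; case: insub => [bb|]; last by rewrite oppr0.
rewrite /negc; exact: (afN (@PB A _ z)). Qed.

Lemma evalc_zero s z : evalc zeroc s z = 0.
Proof. rewrite !evalcE; case: insub => [bb|] //. exact: (af0 (@PB A _ z)). Qed.

Lemma evalc_add f g s z : evalc (addc f g) s z = evalc f s z + evalc g s z.
Proof. rewrite !evalcE; case: insub => [bb|]; last by rewrite addr0.
rewrite /addc; exact: (afD (@PB A _ z)). Qed.

Lemma evalc_push f s y z : (wt L s <= y)%N -> (y <= z)%N ->
  P y z (evalc f s y) = evalc f s z.
Proof. move=> h1 h2; rewrite !evalcE; case: insubP => [bb _ hv|_]; last exact: (af0 (@PB A _ z)).
by apply: P_comp => //; rewrite hv. Qed.

Lemma evalc_gt f s z : (z < wt L s)%N -> evalc f s z = 0.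
Proof. move=> h; rewrite !evalcE; case: insubP => [bb _ hv|_] //.
by apply: P_gt; rewrite hv. Qed.

Definition cobZ f s z : Mod A z := \sum_(c <- dif L s) evalc f c.2 z *~ c.1.

Lemma coboundE f (b : cbas L n.+1) : cobound f b = cobZ f (sval b) (wt L (sval b)).
Proof. by []. Qed.

Lemma sumZ_push f (l : seq (int * bas L)) y z : all (fun c => wt L c.2 <= y)%N l -> (y <= z)%N ->
  P y z (\sum_(c <- l) evalc f c.2 y *~ c.1) = \sum_(c <- l) evalc f c.2 z *~ c.1.
Proof.
move=> hl hyz; elim: l hl => [|c l IH] /=; first by rewrite !big_nil (af0 (@PB A _ z)).
case/andP=> h1 h2; rewrite !big_cons (afD (@PB A _ z)) IH // (afMz (@PB A _ z)).
by rewrite evalc_push.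
Qed.

Lemma cobZ_push f s y z : all (fun c => wt L c.2 <= y)%N (dif L s) -> (y <= z)%N ->
  P y z (cobZ f s y) = cobZ f s z.
Proof. exact: sumZ_push. Qed.

Lemma cobZ_ext f g s z : (forall b, f b = g b) -> cobZ f s z = cobZ g s z.
Proof. by move=> h; apply: eq_bigr => c _; rewrite (evalc_ext _ _ h). Qed.

Lemma cobZ_neg f s z : cobZ (negc f) s z = - cobZ f s z.
Proof. rewrite /cobZ -sumrN; apply: eq_bigr => c _; by rewrite evalc_neg mulNrz. Qed.

Lemma cobZ_add f g s z : cobZ (addc f g) s z = cobZ f s z + cobZ g s z.
Proof. rewrite /cobZ -big_split; apply: eq_bigr => c _; by rewrite evalc_add mulrzDl. Qed.

Lemma cobZ_zero s z : cobZ zeroc s z = 0.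
Proof. rewrite /cobZ big1 // => c _; by rewrite evalc_zero mul0rz. Qed.

Lemma cobZ_eqw f s z z' : z = z' -> tr (Mod A) z z' (cobZ f s z) = cobZ f s z'.
Proof. by move=> e; subst; rewrite trK. Qed.

Lemma evalc_eqw (F : forall z, Mod A z) z z' w : z = z' -> P z w (F z) = P z' w (F z').
Proof. by move=> e; subst. Qed.

End Evalc.

Section Transfer.
Variable L : BAlg.
Local Notation BL := (bar L).
Hypothesis Hisu : forall x, isu L x -> deg L x = 0%N.
Variable A : HMod.

Definition down k (f : cochain BL A k.+1) : cochain L A k :=
  fun x => evalc f [:: sval x] (wt L (sval x)).
Definition upf k (F : cochain L A k) (s : bas BL) : Mod A (wt BL s) :=
  match s as s0 return Mod A (wt BL s0) with
  | [:: x] => evalc F x (wt BL [:: x])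
  | _ => 0
  end.
Definition up k (F : cochain L A k) : cochain BL A k.+1 := fun b => upf F (sval b).

Lemma wt1 x : wt BL [:: x] = wt L x.
Proof. by rewrite /= addn0. Qed.

Lemma okdeg1 k x : (0 < k)%N ->
  (ok BL [:: x] && (deg BL [:: x] == k.+1)) = (ok L x && (deg L x == k)).
Proof.
move=> hk /=; rewrite andbT addn0 add1n eqSS.
case hi: (isu L x) => /=; last by rewrite andbT.
rewrite Hisu //; case: k hk => //; by rewrite andbF.
Qed.

Lemma K1 k (f : cochain BL A k.+1) x z : (0 < k)%N -> evalc (down f) x z = evalc f [:: x] z.
Proof.
move=> hk; case h: (ok L x && (deg L x == k)).
- rewrite (evalc_ok _ _ h) /down /=.
  case: (leqP (wt L x) z) => hz.
  + by rewrite evalc_push // wt1.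
  + rewrite P_gt // evalc_gt // wt1 //.
- rewrite evalc_nok; last by rewrite h.
  by rewrite evalc_nok // okdeg1 // h.
Qed.

Lemma K2 k (F : cochain L A k) x z : (0 < k)%N -> evalc (up F) [:: x] z = evalc F x z.
Proof.
move=> hk; case h: (ok L x && (deg L x == k)).
- have h' : ok BL [:: x] && (deg BL [:: x] == k.+1) by rewrite okdeg1.
  rewrite (evalc_ok _ _ h') /up /=.
  case: (leqP (wt BL [:: x]) z) => hz.
  + by rewrite evalc_push //= addn0.
  + by rewrite P_gt // evalc_gt // -wt1.
- rewrite evalc_nok; last by rewrite okdeg1 // h.
  by rewrite evalc_nok // h.
Qed.

Lemma dif1 x : dif BL [:: x] =
  [seq (- (sgn 0) * c.1, [:: c.2]) | c <- nonunit (dif L x)] ++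
  [:: (aug L x, [::]); (sgn (epre [:: x]) * aug L x, [::])].
Proof. by rewrite /= /bar_dif /= cats0. Qed.

Lemma cobZ_lift k (f : cochain BL A k.+1) x w : (0 < k)%N ->
  cobZ f [:: x] w = - cobZ (down f) x w.
Proof.
move=> hk; rewrite /cobZ dif1 big_cat /= big_map !big_cons big_nil.
rewrite !(evalc_nok f (s := [::]) w) // mul0rz !addr0.
rewrite /nonunit big_filter big_mkcond /= !mul0rz !addr0 -sumrN; apply: eq_bigr => c _.
case: ifP => hu.
- by rewrite K1 // /sgn expr0 mulN1r mulrNz.
- rewrite (evalc_nok (down f)) ?mul0rz ?oppr0 //.
  move/negbFE: hu => /Hisu ->; rewrite andbC; case: eqP => // e; by rewrite -e in hk.
Qed.

Lemma K4 k (f : cochain BL A k.+1) x z : (0 < k)%N ->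
  evalc (cobound f) [:: x] z = - evalc (cobound (down f)) x z.
Proof.
move=> hk; case h: (ok L x && (deg L x == k.+1)).
- have h' : ok BL [:: x] && (deg BL [:: x] == k.+2) by rewrite okdeg1.
  rewrite (evalc_ok _ _ h') (evalc_ok _ _ h) !coboundE /= cobZ_lift //.
  rewrite (afN (@PB A _ z)).
  congr (- _). exact: (evalc_eqw (fun w => cobZ (down f) x w) _ (wt1 x)).
- rewrite evalc_nok; last by rewrite okdeg1 // h.
  by rewrite evalc_nok ?oppr0 // h.
Qed.


End Transfer.

Lemma evalc_mapc (L : BAlg) (A B : HMod) (phi : forall x, Mod A x -> Mod B x) n
  (f : cochain L A n) s z : hmorph phi -> evalc (mapc phi f) s z = phi z (evalc f s z).
Proof.
move=> hp; rewrite !evalcE; case: insub => [bb|].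
- by rewrite /mapc phi_P.
- case: hp => hB _; by rewrite (af0 (hB z)).
Qed.

Lemma cobound_ext (L : BAlg) (A : HMod) n (F G : cochain L A n) :
  (forall b, F b = G b) -> forall b, cobound F b = cobound G b.
Proof. by move=> h b; rewrite !coboundE (cobZ_ext _ _ h). Qed.

Lemma evalc_cob_neg (L : BAlg) (A : HMod) n (G : cochain L A n) s z :
  evalc (cobound (negc G)) s z = - evalc (cobound G) s z.
Proof.
rewrite -evalc_neg; apply: evalc_ext => b; by rewrite /negc !coboundE cobZ_neg.
Qed.

Lemma evalc_zero_ext (L : BAlg) (A : HMod) n (F : cochain L A n) s z :
  (forall b, F b = 0) -> evalc F s z = 0.
Proof. by move=> h; rewrite (evalc_ext (g := @zeroc L A n)) // evalc_zero. Qed.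

Definition Good (L : BAlg) (n : nat) : Prop :=
  exists Theta : forall A : HMod, cochain L A n.+1 -> Mod A 2,
    [/\ forall (A : HMod) (f g : cochain L A n.+1),
          is_cocycle f -> is_cocycle g -> Theta A (addc f g) = Theta A f + Theta A g,
        forall (A : HMod) (f : cochain L A n.+1),
          is_cocycle f -> Theta A f *+ 2 = 0,
        forall (A : HMod) (a : Mod A 2),
          a *+ 2 = 0 -> exists2 f : cochain L A n.+1, is_cocycle f & Theta A f = a,
        forall (A : HMod) (f : cochain L A n.+1),
          is_cocycle f -> (Theta A f = 0 <-> is_coboundary f)
      & forall (A B : HMod) (phi : forall x, Mod A x -> Mod B x), hmorph phi ->
          forall f : cochain L A n.+1,
          is_cocycle f -> Theta B (mapc phi f) = phi 2%N (Theta A f)].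

Section Transfer2.
Variable L : BAlg.
Local Notation BL := (bar L).
Hypothesis Hisu : forall x, isu L x -> deg L x = 0%N.
Variable n : nat.
Hypothesis Hn : (0 < n)%N.
Hypothesis Hshape : forall s, ok BL s -> (n < deg BL s <= n.+3)%N -> exists x, s = [:: x].

Lemma shape_b k (b : cbas BL k) : (n < k <= n.+3)%N -> exists x, sval b = [:: x].
Proof. case: b => s hs hk; case/andP: (hs) => h1 /eqP h2; apply: Hshape => //; by rewrite h2. Qed.

Section A.
Variable A : HMod.

Lemma K3b k (F : cochain L A k) x : (0 < k)%N -> down (up F) x = F x.
Proof. move=> hk; by rewrite /down (K2 Hisu) // evalc_self. Qed.

Lemma K3b' k (F : cochain L A k) : (0 < k)%N -> down (up F) = F.
Proof. move=> hk; apply: functional_extensionality_dep => x; exact: K3b. Qed.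

Lemma down_add k (f g : cochain BL A k.+1) : down (addc f g) = addc (down f) (down g).
Proof. apply: functional_extensionality_dep => x; by rewrite /down /addc evalc_add. Qed.

Lemma T1 k (f : cochain BL A k.+1) : (0 < k)%N -> (n < k.+2 <= n.+3)%N ->
  is_cocycle f <-> is_cocycle (down f).
Proof.
move=> hk hr; split => h b.
- rewrite -evalc_self -(opprK (evalc _ _ _)) -(K4 Hisu) // evalc_zero_ext ?oppr0 //.
- rewrite -evalc_self; case: (shape_b b hr) => x ->.
  by rewrite (K4 Hisu) // evalc_zero_ext ?oppr0.
Qed.

Lemma T2 k (f : cochain BL A k.+2) : (0 < k)%N -> (n < k.+2 <= n.+3)%N ->
  is_coboundary f <-> is_coboundary (down f).
Proof.
move=> hk hr; split.
- case=> g hg; exists (negc (down g)) => x.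
  rewrite -(evalc_self (cobound (negc (down g)))) evalc_cob_neg -(K4 Hisu) //.
  rewrite /down; exact: evalc_ext.
- case=> G hG; exists (up (negc G)) => b.
  rewrite -evalc_self -(evalc_self (cobound (up (negc G)))).
  case: (shape_b b hr) => x ->.
  rewrite (K4 Hisu) // -(K1 Hisu) //.
  rewrite (evalc_ext _ _ hG).
  rewrite (evalc_ext _ _ (cobound_ext (fun y => K3b (negc G) y hk))).
  by rewrite evalc_cob_neg opprK.
Qed.
End A.

Lemma down_map (A B : HMod) (phi : forall x, Mod A x -> Mod B x) k (f : cochain BL A k.+1) :
  hmorph phi -> down (mapc phi f) = mapc phi (down f).
Proof. move=> hp; apply: functional_extensionality_dep => x; by rewrite /down /mapc evalc_mapc. Qed.

Lemma transfer : Good L n -> Good BL n.+1.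
Proof.
case=> Th [h1 h2 h3 h4 h5].
have c1 : forall A (f : cochain BL A n.+2), is_cocycle f <-> is_cocycle (down f).
  move=> A f; apply: T1 => //; lia.
exists (fun A f => Th A (down f)); split.
- move=> A f g hf hg; rewrite down_add h1 //; by apply/c1.
- move=> A f hf; rewrite h2 //; by apply/c1.
- move=> A a ha; case: (h3 A a ha) => F hF hT; exists (up F).
  + by apply/c1; rewrite K3b'.
  + by rewrite K3b'.
- move=> A f hf; rewrite h4; last by apply/c1.
  split => h; apply/T2 => //; lia.
- move=> A B phi hp f hf; rewrite down_map // h5 //; by apply/c1.
Qed.
End Transfer2.

Lemma bar_deg_ge (L : BAlg) m s : (forall x, ok L x -> ~~ isu L x -> (m <= deg L x)%N) ->
  ok (bar L) s -> (size s * m.+1 <= deg (bar L) s)%N.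
Proof.
move=> hm; elim: s => [|x s IH] //= /andP [/andP [ox ux] os].
have := hm x ox ux; have := IH os => /=.
rewrite mulSn; move: (size s * m.+1)%N => q; lia.
Qed.

Lemma BrZ_min k x : ok (BrZ k) x -> ~~ isu (BrZ k) x -> (k <= deg (BrZ k) x)%N.
Proof.
elim: k x => [|k IH] // [|y t] //= /andP [/andP [oy uy] ot] _.
have := IH y oy uy; lia.
Qed.

Lemma isu_BrZ k x : isu (BrZ k.+1) x -> deg (BrZ k.+1) x = 0%N.
Proof. by case: x. Qed.

Lemma shape_BrZ r s : (3 <= r)%N -> ok (bar (BrZ r)) s ->
  (r.+1 < deg (bar (BrZ r)) s <= r.+4)%N -> exists x, s = [:: x].
Proof.
move=> hr os hd; have := bar_deg_ge (@BrZ_min r) os.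
case: s os hd => [|x [|y t]] //= os hd; first by exists x.
nia.
Qed.

Definition eF (a b c : nat) : bas (BrZ 3) := [:: [:: [:: a; b; c]]].
Definition eH (a b : nat) : bas (BrZ 3) := [:: [:: [:: a]; [:: b]]].
Definition eG (a b : nat) : bas (BrZ 3) := [:: [:: [:: a; b]]].
Definition e4 (a b c d : nat) : bas (BrZ 3) := [:: [:: [:: a; b; c; d]]].
Definition e21 (a b c : nat) : bas (BrZ 3) := [:: [:: [:: a; b]; [:: c]]].
Definition e12 (a b c : nat) : bas (BrZ 3) := [:: [:: [:: a]; [:: b; c]]].
Definition eP (a b : nat) : bas (BrZ 3) := [:: [:: [:: a]]; [:: [:: b]]].

Lemma eqn0F a b : (0 < a)%N -> eqn (a + b) 0 = false.
Proof. by case: a. Qed.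

Lemma dif_eF a b c : (0 < a)%N -> (0 < b)%N -> (0 < c)%N ->
  dif (BrZ 3) (eF a b c) = [:: (1, eG b c); (-1, eG (a + b) c); (1, eG a (b + c));
     (-1, eG a b); (0, [::]); (0, [::])].
Proof. move=> ha hb hc. cbn. by rewrite !eqn0F. Qed.

Lemma dif_eH a b : (0 < a)%N -> (0 < b)%N ->
  dif (BrZ 3) (eH a b) = [:: (0, [:: [:: [:: b]]]); (-1, eG a b); (1, eG b a);
     (0, [:: [:: [:: a]]]); (0, [::]); (0, [::])].
Proof. move=> ha hb. by cbn. Qed.

Lemma dif_e4 a b c d : (0 < a)%N -> (0 < b)%N -> (0 < c)%N -> (0 < d)%N ->
  dif (BrZ 3) (e4 a b c d) = [:: (1, eF b c d); (-1, eF (a + b) c d); (1, eF a (b + c) d);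
     (-1, eF a b (c + d)); (1, eF a b c); (0, [::]); (0, [::])].
Proof. move=> ha hb hc hd. cbn. by rewrite !eqn0F. Qed.

Lemma dif_e21 a b c : (0 < a)%N -> (0 < b)%N -> (0 < c)%N ->
  dif (BrZ 3) (e21 a b c) = [:: (1, eH b c); (-1, eH (a + b) c); (1, eH a c);
     (0, [:: [:: [:: c]]]); (1, eF a b c); (-1, eF a c b); (1, eF c a b);
     (0, [:: [:: [:: a; b]]]); (0, [::]); (0, [::])].
Proof. move=> ha hb hc. cbn. by rewrite !eqn0F. Qed.

Lemma dif_e12 a b c : (0 < a)%N -> (0 < b)%N -> (0 < c)%N ->
  dif (BrZ 3) (e12 a b c) = [:: (1, eH a c); (-1, eH a (b + c)); (1, eH a b);
     (0, [:: [:: [:: b; c]]]); (-1, eF a b c); (1, eF b a c); (-1, eF b c a);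
     (0, [:: [:: [:: a]]]); (0, [::]); (0, [::])].
Proof. move=> ha hb hc. cbn. by rewrite !eqn0F. Qed.

Lemma dif_eP a b : (0 < a)%N -> (0 < b)%N ->
  dif (BrZ 3) (eP a b) = [:: (0, [:: [:: [:: b]]]); (-1, eH a b); (-1, eH b a);
     (0, [:: [:: [:: a]]])].
Proof. move=> ha hb. by cbn. Qed.

Lemma deg1E (w : bas (BrZ 1)) : deg (BrZ 1) w = size w.
Proof. rewrite /=; have -> : sumn [seq 0%N | _ <- w] = 0%N by elim: w. by rewrite addn0. Qed.

Lemma ok1E (w : bas (BrZ 1)) : ok (BrZ 1) w = all (fun v => 0 < v)%N w.
Proof. by elim: w => //= v w ->; case: v. Qed.

Lemma deg2E (x : bas (BrZ 2)) : deg (BrZ 2) x = (size x + sumn [seq deg (BrZ 1) w | w <- x])%N.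
Proof. by []. Qed.
Lemma ok2E (x : bas (BrZ 2)) : ok (BrZ 2) x = all (fun w => ok (BrZ 1) w && ~~ nilp w) x.
Proof. by []. Qed.
Lemma deg3E (s : bas (BrZ 3)) : deg (BrZ 3) s = (size s + sumn [seq deg (BrZ 2) w | w <- s])%N.
Proof. by []. Qed.
Lemma ok3E (s : bas (BrZ 3)) : ok (BrZ 3) s = all (fun w => ok (BrZ 2) w && ~~ nilp w) s.
Proof. by []. Qed.

Lemma deg2E' (x : bas (BrZ 2)) : deg (BrZ 2) x = (size x + sumn [seq size w | w <- x])%N.
Proof. rewrite deg2E; congr (_ + sumn _)%N; apply: eq_map => w; exact: deg1E. Qed.
Lemma ok2E' (x : bas (BrZ 2)) : ok (BrZ 2) x = all (fun w => all (fun v => 0 < v)%N w && ~~ nilp w) x.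
Proof. rewrite ok2E; apply: eq_all => w; by rewrite ok1E. Qed.

Lemma size_ge2 (x : bas (BrZ 2)) : ok (BrZ 2) x -> (size x * 2 <= deg (BrZ 2) x)%N.
Proof. move=> h; exact: (bar_deg_ge (@BrZ_min 1) h). Qed.

Lemma cls2_2 (x : bas (BrZ 2)) : ok (BrZ 2) x -> deg (BrZ 2) x = 2%N ->
  exists a, (0 < a)%N /\ x = [:: [:: a]].
Proof.
move=> ox dx; have := size_ge2 ox; rewrite dx.
move: ox dx; rewrite ok2E' deg2E'.
case: x => [|[|a [|a' w]] [|w2 x]] //=; try lia.
rewrite !andbT => ha _ _; by exists a.
Qed.

Lemma cls2_4 (x : bas (BrZ 2)) : ok (BrZ 2) x -> deg (BrZ 2) x = 4%N ->
  (exists a b c, [/\ (0 < a)%N, (0 < b)%N, (0 < c)%N & x = [:: [:: a; b; c]]]) \/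
  (exists a b, [/\ (0 < a)%N, (0 < b)%N & x = [:: [:: a]; [:: b]]]).
Proof.
move=> ox dx; have := size_ge2 ox; rewrite dx.
move: ox dx; rewrite ok2E' deg2E'.
case: x => [|w1 [|w2 [|w3 x]]] //=; try lia.
- case: w1 => [|a [|b [|c [|d w]]]] //=; try lia.
  rewrite !andbT => /and3P [ha hb hc] _ _; left; by exists a, b, c.
- case: w1 => [|a [|a' w1]] //=; case: w2 => [|b [|b' w2]] //=; try lia.
  rewrite !andbT => /andP [ha hb] _ _; right; by exists a, b.
Qed.

Lemma cls2_5 (x : bas (BrZ 2)) : ok (BrZ 2) x -> deg (BrZ 2) x = 5%N ->
  [\/ exists a b c d, [/\ (0 < a)%N, (0 < b)%N, (0 < c)%N, (0 < d)%N & x = [:: [:: a; b; c; d]]],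
      exists a b c, [/\ (0 < a)%N, (0 < b)%N, (0 < c)%N & x = [:: [:: a; b]; [:: c]]] |
      exists a b c, [/\ (0 < a)%N, (0 < b)%N, (0 < c)%N & x = [:: [:: a]; [:: b; c]]]].
Proof.
move=> ox dx; have := size_ge2 ox; rewrite dx.
move: ox dx; rewrite ok2E' deg2E'.
case: x => [|w1 [|w2 [|w3 x]]] //=; try lia.
- case: w1 => [|a [|b [|c [|d [|e w]]]]] //=; try lia.
  rewrite !andbT => /and4P [ha hb hc hd] _ _; apply: Or31; by exists a, b, c, d.
- case: w1 => [|a [|a' [|a'' w1]]] //=; case: w2 => [|b [|b' [|b'' w2]]] //=; try lia.
  + move=> H _ _; apply: Or33; exists a, b, b'; split => //; move: H; lia.
  + move=> H _ _; apply: Or32; exists a, a', b; split => //; move: H; lia.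
Qed.

Lemma size_ge3 (s : bas (BrZ 3)) : ok (BrZ 3) s -> (size s * 3 <= deg (BrZ 3) s)%N.
Proof. move=> h; exact: (bar_deg_ge (@BrZ_min 2) h). Qed.

Lemma cls3_1 (s : bas (BrZ 3)) d : ok (BrZ 3) s -> deg (BrZ 3) s = d -> (0 < d < 6)%N ->
  exists x, [/\ s = [:: x], ok (BrZ 2) x & deg (BrZ 2) x = d.-1].
Proof.
move=> os ds hd; have := size_ge3 os; rewrite ds.
move: os ds; rewrite ok3E deg3E.
case: s => [|x [|y s]] //=; try lia.
move=> /andP[/andP[ox _] _] dx _; exists x; split => //; lia.
Qed.

Lemma cls5 (s : bas (BrZ 3)) : ok (BrZ 3) s -> deg (BrZ 3) s = 5%N ->
  (exists a b c, [/\ (0 < a)%N, (0 < b)%N, (0 < c)%N & s = eF a b c]) \/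
  (exists a b, [/\ (0 < a)%N, (0 < b)%N & s = eH a b]).
Proof.
move=> os ds; case: (cls3_1 os ds) => // x [-> ox dx].
case: (cls2_4 ox dx) => [[a [b [c [ha hb hc ->]]]]|[a [b [ha hb ->]]]].
- by left; exists a, b, c.
- by right; exists a, b.
Qed.

Lemma deg3_1 x : deg (BrZ 3) [:: x] = (deg (BrZ 2) x).+1.
Proof. by rewrite /= addn0 add1n. Qed.
Lemma deg3_2 x y : deg (BrZ 3) [:: x; y] = (deg (BrZ 2) x + deg (BrZ 2) y).+2.
Proof. rewrite /= addn0. lia. Qed.
Lemma ok3_1 x : ok (BrZ 3) [:: x] = ok (BrZ 2) x && ~~ nilp x.
Proof. by rewrite /= andbT. Qed.
Lemma ok3_2 x y : ok (BrZ 3) [:: x; y] = [&& ok (BrZ 2) x, ~~ nilp x, ok (BrZ 2) y & ~~ nilp y].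
Proof. by rewrite /= andbT !andbA. Qed.

Lemma cls6 (s : bas (BrZ 3)) : ok (BrZ 3) s -> deg (BrZ 3) s = 6%N ->
  [\/ exists a b c d, [/\ (0 < a)%N, (0 < b)%N, (0 < c)%N, (0 < d)%N & s = e4 a b c d],
      exists a b c, [/\ (0 < a)%N, (0 < b)%N, (0 < c)%N & s = e21 a b c],
      exists a b c, [/\ (0 < a)%N, (0 < b)%N, (0 < c)%N & s = e12 a b c] |
      exists a b, [/\ (0 < a)%N, (0 < b)%N & s = eP a b]].
Proof.
move=> os ds; have := size_ge3 os; rewrite ds.
case: s os ds => [|x [|y [|z s]]]; try (move=> /= *; lia).
- rewrite ok3_1 => /andP [ox _] hd _; rewrite deg3_1 in hd.
  have dx' : deg (BrZ 2) x = 5%N by lia.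
  case: (cls2_5 ox dx') => [[a [b [c [d [ha hb hc hd4 ->]]]]]|[a [b [c [ha hb hc ->]]]]|[a [b [c [ha hb hc ->]]]]].
  + by apply: Or41; exists a, b, c, d.
  + by apply: Or42; exists a, b, c.
  + by apply: Or43; exists a, b, c.
- rewrite ok3_2 => /and4P [ox nx oy ny] hd _; rewrite deg3_2 in hd.
  have hx := BrZ_min ox nx; have hy := BrZ_min oy ny.
  have dx : deg (BrZ 2) x = 2%N by lia.
  have dy : deg (BrZ 2) y = 2%N by lia.
  case: (cls2_2 ox dx) => a [ha ->]; case: (cls2_2 oy dy) => b [hb ->].
  by apply: Or44; exists a, b.
Qed.

Section Base.
Variable A : HMod.
Local Notation f5 := (cochain (BrZ 3) A 5).

Lemma cocyc0 (f : f5) s Z : is_cocycle f -> ok (BrZ 3) s && (deg (BrZ 3) s == 6%N) ->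
  all (fun c => wt (BrZ 3) c.2 <= wt (BrZ 3) s)%N (dif (BrZ 3) s) -> (wt (BrZ 3) s <= Z)%N ->
  cobZ f s Z = 0.
Proof.
move=> hf hs hw hZ; have := hf (exist _ s hs); rewrite coboundE /= => e.
by rewrite -(cobZ_push _ hw hZ) e (af0 (@PB A _ Z)).
Qed.

Ltac side := rewrite /= ?addn0; try lia.

Lemma eq_e4 (f : f5) a b c d Z : is_cocycle f -> (0 < a)%N -> (0 < b)%N -> (0 < c)%N -> (0 < d)%N ->
  (a + b + c + d <= Z)%N ->
  evalc f (eF b c d) Z - evalc f (eF (a + b) c d) Z + evalc f (eF a (b + c) d) Z
  - evalc f (eF a b (c + d)) Z + evalc f (eF a b c) Z = 0.
Proof.
move=> hf ha hb hc hd hZ.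
rewrite -(@cocyc0 f (e4 a b c d) Z hf); first last.
- side.
- rewrite dif_e4 //; side.
- side.
rewrite /cobZ dif_e4 // !big_cons big_nil /= ?mulr1z ?mulrN1z ?mulr0z.
zmod_eq.
Qed.

Lemma eq_e21 (f : f5) a b c Z : is_cocycle f -> (0 < a)%N -> (0 < b)%N -> (0 < c)%N ->
  (a + b + c <= Z)%N ->
  evalc f (eH b c) Z - evalc f (eH (a + b) c) Z + evalc f (eH a c) Z
  + evalc f (eF a b c) Z - evalc f (eF a c b) Z + evalc f (eF c a b) Z = 0.
Proof.
move=> hf ha hb hc hZ.
rewrite -(@cocyc0 f (e21 a b c) Z hf); first last.
- side.
- rewrite dif_e21 //; side.
- side.
rewrite /cobZ dif_e21 // !big_cons big_nil /= ?mulr1z ?mulrN1z ?mulr0z.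
zmod_eq.
Qed.

Lemma eq_e12 (f : f5) a b c Z : is_cocycle f -> (0 < a)%N -> (0 < b)%N -> (0 < c)%N ->
  (a + b + c <= Z)%N ->
  evalc f (eH a c) Z - evalc f (eH a (b + c)) Z + evalc f (eH a b) Z
  - evalc f (eF a b c) Z + evalc f (eF b a c) Z - evalc f (eF b c a) Z = 0.
Proof.
move=> hf ha hb hc hZ.
rewrite -(@cocyc0 f (e12 a b c) Z hf); first last.
- side.
- rewrite dif_e12 //; side.
- side.
rewrite /cobZ dif_e12 // !big_cons big_nil /= ?mulr1z ?mulrN1z ?mulr0z.
zmod_eq.
Qed.

Lemma eq_eP (f : f5) a b Z : is_cocycle f -> (0 < a)%N -> (0 < b)%N ->
  (a + b <= Z)%N ->
  evalc f (eH a b) Z + evalc f (eH b a) Z = 0.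
Proof.
move=> hf ha hb hZ.
apply: (@oppr_inj _ _ 0); rewrite oppr0.
rewrite -(@cocyc0 f (eP a b) Z hf); first last.
- side.
- rewrite dif_eP //; side.
- side.
rewrite /cobZ dif_eP // !big_cons big_nil /= ?mulr1z ?mulrN1z ?mulr0z.
zmod_eq.
Qed.

Definition S (f : f5) a b Z : Mod A Z := \sum_(1 <= k < a) evalc f (eF 1 k b) Z.

Lemma S1 f b Z : S f 1 b Z = 0.
Proof. by rewrite /S big_geq. Qed.

Lemma SS f a b Z : (0 < a)%N -> S f a.+1 b Z = S f a b Z + evalc f (eF 1 a b) Z.
Proof. by move=> ha; rewrite /S big_nat_recr. Qed.

Lemma VC (f : f5) : is_cocycle f -> forall a b c Z, (0 < b)%N -> (0 < c)%N ->
  (a.+1 + b + c <= Z)%N ->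
  evalc f (eF a.+1 b c) Z = - S f b c Z + S f (a.+1 + b) c Z - S f a.+1 (b + c) Z + S f a.+1 b Z.
Proof.
move=> hf; elim=> [|a IH] b c Z hb hc hZ.
- rewrite !S1 add1n SS //. zmod_eq.
- have h4 := @eq_e4 f 1 a.+1 b c Z hf isT isT hb hc ltac:(lia).
  rewrite add1n IH // in h4; try lia.
  rewrite addSn (@SS f (a.+1 + b) c Z) ?(@SS f a.+1 (b + c) Z) ?(@SS f a.+1 b Z) //; try lia.
  lin1 h4.
Qed.

Lemma VC' (f : f5) a b c Z : is_cocycle f -> (0 < a)%N -> (0 < b)%N -> (0 < c)%N ->
  (a + b + c <= Z)%N ->
  evalc f (eF a b c) Z = - S f b c Z + S f (a + b) c Z - S f a (b + c) Z + S f a b Z.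
Proof. move=> hf; case: a => // a _ hb hc hZ; exact: VC. Qed.

Definition D (f : f5) a b Z : Mod A Z := evalc f (eH a b) Z - S f a b Z + S f b a Z.

Lemma D21 (f : f5) a b c Z : is_cocycle f -> (0 < a)%N -> (0 < b)%N -> (0 < c)%N ->
  (a + b + c <= Z)%N -> D f b c Z - D f (a + b) c Z + D f a c Z = 0.
Proof.
move=> hf ha hb hc hZ; have h := eq_e21 hf ha hb hc hZ.
rewrite (@VC' f a b c Z) // (@VC' f a c b Z) // ?(@VC' f c a b Z) // in h; try lia.
rewrite (addnC c a) (addnC c b) in h.
rewrite /D; lin1 h.
Qed.

Lemma D12 (f : f5) a b c Z : is_cocycle f -> (0 < a)%N -> (0 < b)%N -> (0 < c)%N ->
  (a + b + c <= Z)%N -> D f a c Z - D f a (b + c) Z + D f a b Z = 0.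
Proof.
move=> hf ha hb hc hZ; have h := eq_e12 hf ha hb hc hZ.
rewrite (@VC' f a b c Z) // (@VC' f b a c Z) // ?(@VC' f b c a Z) // in h; try lia.
rewrite (addnC b a) (addnC c a) in h.
rewrite /D; lin1 h.
Qed.

Lemma Dzero (f : f5) : is_cocycle f -> evalc f (eH 1 1) 2 = 0 ->
  forall p q Z, (0 < p)%N -> (0 < q)%N -> (p + q <= Z)%N -> D f p q Z = 0.
Proof.
move=> hf h11.
have D11 : forall Z, (2 <= Z)%N -> D f 1 1 Z = 0.
  move=> Z hZ; rewrite /D subrK -(@evalc_push _ _ _ f (eH 1 1) 2 Z) // h11.
  exact: (af0 (@PB A _ Z)).
have D1 : forall q Z, (0 < q)%N -> (1 + q <= Z)%N -> D f 1 q Z = 0.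
  elim=> // q IH Z _ hZ; case: q IH hZ => [|q] IH hZ; first exact: D11.
  have h := @D12 f 1 1 q.+1 Z hf isT isT isT ltac:(lia).
  rewrite IH // ?D11 // in h; try lia.
  rewrite add1n in h; lin1 h.
elim=> // p IH q Z _ hq hZ; case: p IH hZ => [|p] IH hZ; first exact: D1.
have h := @D21 f 1 p.+1 q Z hf isT isT hq ltac:(lia).
rewrite IH // ?D1 // in h; try lia.
rewrite add1n in h; lin1 h.
Qed.

Definition gfun (f : f5) (s : bas (BrZ 3)) : Mod A (wt (BrZ 3) s) :=
  match s as s0 return Mod A (wt (BrZ 3) s0) with
  | [:: [:: [:: x; y]]] => - S f x y (wt (BrZ 3) [:: [:: [:: x; y]]])
  | _ => 0
  end.
Definition gco (f : f5) : cochain (BrZ 3) A 4 := fun b => gfun f (sval b).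

Lemma evalc_g (f : f5) x y Z : (0 < x)%N -> (0 < y)%N -> (x + y <= Z)%N ->
  evalc (gco f) (eG x y) Z = - S f x y Z.
Proof.
move=> hx hy hZ.
have H : ok (BrZ 3) (eG x y) && (deg (BrZ 3) (eG x y) == 4%N) by side.
rewrite (evalc_ok _ _ H) /gco /= (afN (@PB A _ Z)); congr (- _).
rewrite /S (afsum (@PB A _ Z)); apply: eq_big_nat => k /andP [h1 h2].
apply: evalc_push; side.
Qed.

Definition fhfun (x : Mod A 2) (s : bas (BrZ 3)) : Mod A (wt (BrZ 3) s) :=
  match s as s0 return Mod A (wt (BrZ 3) s0) with
  | [:: [:: [:: p]; [:: q]]] => P 2 (wt (BrZ 3) [:: [:: [:: p]; [:: q]]]) x *+ (p * q)
  | _ => 0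
  end.
Definition fH (x : Mod A 2) : f5 := fun b => fhfun x (sval b).

Lemma evalc_fH_H x p q Z : (0 < p)%N -> (0 < q)%N -> (p + q <= Z)%N ->
  evalc (fH x) (eH p q) Z = P 2 Z x *+ (p * q).
Proof.
move=> hp hq hZ.
have H : ok (BrZ 3) (eH p q) && (deg (BrZ 3) (eH p q) == 5%N) by side.
rewrite (evalc_ok _ _ H) /fH /= (afMn (@PB A _ Z)) P_comp //; side.
Qed.

Lemma evalc_fH_F x a b c Z : evalc (fH x) (eF a b c) Z = 0.
Proof.
rewrite evalcE; case: insubP => [bb _ hv|_] //.
rewrite /fH; case: bb hv => s' hs' /= hv; subst s'.
exact: (af0 (@PB A _ Z)).
Qed.

Lemma fH_cocycle x : x *+ 2 = 0 -> is_cocycle (fH x).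
Proof.
move=> hx [s hs]; rewrite coboundE /=.
case/andP: (hs) => os /eqP ds.
case: (cls6 os ds) => [[a [b [c [d [ha hb hc hd ->]]]]]|[a [b [c [ha hb hc ->]]]]
                     |[a [b [c [ha hb hc ->]]]]|[a [b [ha hb ->]]]].
- rewrite /cobZ dif_e4 // !big_cons big_nil /= !evalc_fH_F.
  rewrite ?mulr1z ?mulrN1z ?mulr0z. zmod_eq.
- rewrite /cobZ dif_e21 // !big_cons big_nil /= !evalc_fH_F ?mulr1z ?mulrN1z ?mulr0z.
  rewrite !evalc_fH_H //; try (rewrite /= ?addn0; lia).
  rewrite mulnDl mulrnDr; zmod_eq.
- rewrite /cobZ dif_e12 // !big_cons big_nil /= !evalc_fH_F ?mulr1z ?mulrN1z ?mulr0z.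
  rewrite !evalc_fH_H //; try (rewrite /= ?addn0; lia).
  rewrite mulnDr mulrnDr; zmod_eq.
- rewrite /cobZ dif_eP // !big_cons big_nil /= ?mulr1z ?mulrN1z ?mulr0z.
  rewrite !evalc_fH_H //; try (rewrite /= ?addn0; lia).
  rewrite (mulnC b a).
  set y := P 2 _ x.
  have hy : y *+ 2 = 0 by rewrite /y -(afMn (@PB A 2 _)) hx (af0 (@PB A _ _)).
  by rewrite add0r !addr0 -opprD -mulr2n mulrnAC hy mul0rn oppr0.
Qed.
End Base.

Lemma cobZ_eH11 (A : HMod) (g : cochain (BrZ 3) A 4) w : cobZ g (eH 1 1) w = 0.
Proof. rewrite /cobZ dif_eH // !big_cons big_nil /= ?mulr1z ?mulrN1z ?mulr0z; zmod_eq. Qed.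

Lemma base : Good (BrZ 3) 4.
Proof.
exists (fun A f => evalc f (eH 1 1) 2); split.
- move=> A f g _ _; exact: evalc_add.
- move=> A f hf; have := @eq_eP A f 1 1 2 hf isT isT isT; by rewrite mulr2n.
- move=> A a ha; exists (fH a); first exact: fH_cocycle.
  by rewrite evalc_fH_H // P_id mulr1n.
- move=> A f hf; split.
  + move=> h11; exists (gco f) => bb.
    rewrite -[LHS](evalc_self f bb) coboundE.
    case: bb => s hs /=; case/andP: (hs) => os /eqP ds.
    case: (cls5 os ds) => [[a [b [c [ha hb hc ->]]]]|[a [b [ha hb ->]]]].
    * rewrite /cobZ dif_eF // !big_cons big_nil /= ?mulr1z ?mulrN1z ?mulr0z.
      rewrite !evalc_g //; try (rewrite /= ?addn0; lia).
      rewrite (@VC' A f a b c) //; try (rewrite /= ?addn0; lia).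
      zmod_eq.
    * rewrite /cobZ dif_eH // !big_cons big_nil /= ?mulr1z ?mulrN1z ?mulr0z.
      rewrite !evalc_g //; try (rewrite /= ?addn0; lia).
      have hD := @Dzero A f hf h11 a b (wt (BrZ 3) (eH a b)) ha hb ltac:(rewrite /= ?addn0; lia).
      rewrite /D in hD; lin1 hD.
  + case=> g hg; rewrite (evalc_ext _ _ hg).
    have H : ok (BrZ 3) (eH 1 1) && (deg (BrZ 3) (eH 1 1) == 5%N) by [].
    rewrite (evalc_ok _ _ H) coboundE cobZ_eH11; exact: (af0 (@PB A _ _)).
- move=> A B phi hp f hf; exact: evalc_mapc.
Qed.

Lemma allGood r : (3 <= r)%N -> Good (BrZ r) r.+1.
Proof.
elim: r => [|r IH] // hr.
case: (leqP 3 r) => hr3; last first.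
  have e : r = 2%N by lia.
  by rewrite e; exact: base.
case: r IH hr hr3 => [|r'] // IH hr hr3.
apply: (@transfer (BrZ r'.+1) (@isu_BrZ r') r'.+2) => //.
- by move=> s os hd; apply: shape_BrZ.
- exact: IH.
Qed.

Theorem proposition7p14 (r : nat) : (3 <= r)%N ->
  exists Theta : forall A : HMod, cochain (BrZ r) A r.+2 -> Mod A 2,
    [/\ forall (A : HMod) (f g : cochain (BrZ r) A r.+2),
          is_cocycle f -> is_cocycle g -> Theta A (addc f g) = Theta A f + Theta A g,
        forall (A : HMod) (f : cochain (BrZ r) A r.+2),
          is_cocycle f -> Theta A f *+ 2 = 0,
        forall (A : HMod) (a : Mod A 2),
          a *+ 2 = 0 -> exists2 f : cochain (BrZ r) A r.+2, is_cocycle f & Theta A f = a,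
        forall (A : HMod) (f : cochain (BrZ r) A r.+2),
          is_cocycle f -> (Theta A f = 0 <-> is_coboundary f)
      & forall (A B : HMod) (phi : forall x, Mod A x -> Mod B x), hmorph phi ->
          forall f : cochain (BrZ r) A r.+2,
          is_cocycle f -> Theta B (mapc phi f) = phi 2%N (Theta A f)].
Proof. move=> hr; exact: (allGood hr). Qed.
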